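(* Every orthogonally convex polygon $P$ has exactly $4$ knobs; more precisely, $P$ has exactly one left knob, exactly one right knob, exactly one top knob and exactly one bottom knob.
   Context: An orthogonal polygon $P$ is orthogonally convex if it is a simply connected polygon with all edges parallel to the $x$- or $y$-axis and the intersection of every line parallel to the $x$-axis or $y$-axis with $P$ is a single (possibly empty) line segment. A vertex is convex if its interior angle is $90^\circ$. A knob is an edge $(v_i,v_{i+1})$ both of whose endpoints are convex. A vertical knob is a left knob if points immediately to its left are outside $P$, and a right knob otherwise; a horizontal knob is a top knob if points immediately above it are outside $P$, and a bottom knob otherwise. *)

(* Defs.v *)
From HB Require Import structures.
From mathcomp Require Import all_boot all_order all_algebra.
Set Implicit Arguments. Unset Strict Implicit. Unset Printing Implicit Defensive.
Import Order.TTheory GRing.Theory Num.Theory.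
Local Open Scope ring_scope.

Section Polygon.
Variables (R : realFieldType) (n : nat) (v : 'I_n -> R * R).

Definition vx (i : 'I_n) : R := (v i).1.
Definition vy (i : 'I_n) : R := (v i).2.

(* edge i is the segment (v i, v (ordS i)) *)
Definition vert_edge (i : 'I_n) : Prop :=
  vx i = vx (ordS i) /\ vy i <> vy (ordS i).
Definition horiz_edge (i : 'I_n) : Prop :=
  vy i = vy (ordS i) /\ vx i <> vx (ordS i).

(* orthogonal polygon: every edge axis-parallel, consecutive edges perpendicular
   (so every vertex is a genuine corner) *)
Definition rectilinear : Prop :=
  forall i : 'I_n,
    (vert_edge i /\ horiz_edge (ordS i)) \/ (horiz_edge i /\ vert_edge (ordS i)).

Definition on_edge (p : R * R) (i : 'I_n) : Prop :=
  exists t : R, 0 <= t <= 1 /\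
    p = ((1 - t) * vx i + t * vx (ordS i), (1 - t) * vy i + t * vy (ordS i)).

Definition simple_polygon : Prop :=
  forall (i j : 'I_n) (p : R * R), i <> j -> on_edge p i -> on_edge p j ->
    (j = ordS i /\ p = v j) \/ (i = ordS j /\ p = v i).

Definition boundary (p : R * R) : Prop := exists i, on_edge p i.

(* interior by ray casting: the horizontal ray to the right of p crosses an
   odd number of vertical edges (half-open convention in y) *)
Definition crossings (p : R * R) : {set 'I_n} :=
  [set i : 'I_n | [&& vx i == vx (ordS i), p.1 < vx i,
                      Num.min (vy i) (vy (ordS i)) <= p.2
                    & p.2 < Num.max (vy i) (vy (ordS i))]].

Definition interior (p : R * R) : Prop :=
  ~ boundary p /\ odd #|crossings p|.

Definition inP (p : R * R) : Prop := boundary p \/ interior p.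

Definition ortho_convex : Prop :=
  (forall c x1 x2 x : R, inP (x1, c) -> inP (x2, c) -> x1 <= x <= x2 -> inP (x, c))
  /\ (forall c y1 y2 y : R, inP (c, y1) -> inP (c, y2) -> y1 <= y <= y2 -> inP (c, y)).

Definition orthogonally_convex_polygon : Prop :=
  (4 <= n)%N /\ rectilinear /\ simple_polygon /\ ortho_convex.

(* vertex i is convex: interior angle 90 degrees, i.e. the open quadrant
   spanned by the two incident edges is locally inside P *)
Definition convex_vertex (i : 'I_n) : Prop :=
  exists2 eps : R, 0 < eps & forall s t : R, 0 < s < eps -> 0 < t < eps ->
    interior (vx i + s * (vx (ord_pred i) - vx i) + t * (vx (ordS i) - vx i),
              vy i + s * (vy (ord_pred i) - vy i) + t * (vy (ordS i) - vy i)).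

Definition knob (i : 'I_n) : Prop := convex_vertex i /\ convex_vertex (ordS i).

Definition left_outside (i : 'I_n) : Prop :=
  exists2 eps : R, 0 < eps & forall t y : R, 0 < t < eps ->
    Num.min (vy i) (vy (ordS i)) < y < Num.max (vy i) (vy (ordS i)) ->
    ~ inP (vx i - t, y).
Definition above_outside (i : 'I_n) : Prop :=
  exists2 eps : R, 0 < eps & forall t x : R, 0 < t < eps ->
    Num.min (vx i) (vx (ordS i)) < x < Num.max (vx i) (vx (ordS i)) ->
    ~ inP (x, vy i + t).

Definition left_knob (i : 'I_n) : Prop := knob i /\ vert_edge i /\ left_outside i.
Definition right_knob (i : 'I_n) : Prop := knob i /\ vert_edge i /\ ~ left_outside i.
Definition top_knob (i : 'I_n) : Prop := knob i /\ horiz_edge i /\ above_outside i.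
Definition bottom_knob (i : 'I_n) : Prop := knob i /\ horiz_edge i /\ ~ above_outside i.

End Polygon.

(* Main.v *)
Require Import Defs.
From mathcomp Require Import all_boot all_order all_algebra.
From mathcomp Require Import ring lra.
Set Implicit Arguments. Unset Strict Implicit. Unset Printing Implicit Defensive.
Import Order.TTheory GRing.Theory Num.Theory.

Module Aux.
Local Open Scope ring_scope.


Lemma minmax_xor (R : realFieldType) (a b y : R) :
  (Num.min a b <= y < Num.max a b) = (a <= y) (+) (b <= y).
Proof.
rewrite ge_min lt_max !ltNge.
by case: (a <= y); case: (b <= y).
Qed.

Lemma neqF (T : eqType) (a b : T) : a <> b -> (a == b) = false.
Proof. by move=> h; case: eqP. Qed.

Section Parity.
Variables (R : realFieldType) (n : nat) (v : 'I_n -> R * R).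

Definition xs (S : pred 'I_n) : bool := \big[addb/false]_(i : 'I_n) S i.

Lemma xsD (S T : pred 'I_n) : xs (fun i => S i (+) T i) = xs S (+) xs T.
Proof. by rewrite /xs big_split. Qed.

Lemma xs_odd (S : pred 'I_n) : odd #|[set i | S i]| = xs S.
Proof.
rewrite cardsE -sum1_card big_mkcond /=.
rewrite (big_morph odd (id1 := false) (op1 := addb)) //; last by move=> x y; rewrite oddD.
rewrite /xs; apply: eq_bigr => i _; rewrite unfold_in; by case: (S i).
Qed.

Lemma xs_ext (S T : pred 'I_n) : (forall i, S i = T i) -> xs S = xs T.
Proof. by move=> h; rewrite /xs; apply: eq_bigr => i _; rewrite h. Qed.

Lemma xs_false (S : pred 'I_n) : (forall i, S i = false) -> xs S = false.
Proof. by move=> h; rewrite /xs big1 // => i _; rewrite h. Qed.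

Lemma xs_one (S : pred 'I_n) k : (forall i, S i -> i = k) -> xs S = S k.
Proof.
move=> h; rewrite /xs (bigD1 k) //= big1 ?addbF // => i /eqP ne.
by case Si: (S i) => //; case: ne; apply: h.
Qed.

Lemma xs_edges (e : pred 'I_n) (He : forall i, e i (+) e (ord_pred i) = true)
  (S : pred 'I_n) : xs S = xs (fun f => e f && (S f (+) S (ordS f))).
Proof.
rewrite [RHS](xs_ext (T := fun f => (e f && S f) (+) (e f && S (ordS f)))); last first.
  by move=> i; case: (e i).
rewrite xsD.
have -> : xs (fun f => e f && S (ordS f)) = xs (fun u => e (ord_pred u) && S u).
  rewrite /xs (reindex_inj (@ord_pred_inj n)) /=.
  by apply: eq_bigr => i _; rewrite ord_predK.
rewrite -xsD; apply: xs_ext => i.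
by move: (He i); case: (e i); case: (e (ord_pred i)); case: (S i).
Qed.

Definition vertb (i : 'I_n) := vx v i == vx v (ordS i).
Definition horizb (i : 'I_n) := vy v i == vy v (ordS i).

Hypothesis rect : rectilinear v.

Lemma rect_cases i : (vert_edge v i /\ horiz_edge v (ordS i)) \/ (horiz_edge v i /\ vert_edge v (ordS i)).
Proof. exact: rect. Qed.

Lemma vertbE i : vertb i = ~~ horizb i.
Proof.
rewrite /vertb /horizb.
case: (rect i) => [[[h1 h2] _]|[[h1 h2] _]].
  by rewrite h1 eqxx; apply/esym/eqP.
rewrite h1 eqxx; rewrite (neqF h2); done.
Qed.

Lemma vertb_alt i : vertb i (+) vertb (ord_pred i) = true.
Proof.
have := rect (ord_pred i); rewrite /vertb; set j := ord_pred i.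
have ej : ordS j = i by rewrite /j ord_predK.
move=> [[[h1 _] [_ h2]]|[[_ h1] [h2 _]]]; rewrite /= ?ej in h1 h2 *.
  by rewrite h1 eqxx (neqF h2).
by rewrite -h2 (neqF h1) eqxx.
Qed.

Lemma horizb_alt i : horizb i (+) horizb (ord_pred i) = true.
Proof.
have h : forall j, horizb j = ~~ vertb j by move=> j; rewrite vertbE negbK.
by rewrite !h addbN addNb negbK vertb_alt.
Qed.

Lemma vertb_vert i : vertb i -> vert_edge v i.
Proof.
move=> h; case: (rect i) => [[]//|[[_ h1] _]].
by move/eqP: h.
Qed.

Lemma horizb_horiz i : horizb i -> horiz_edge v i.
Proof.
move=> h; case: (rect i) => [[[_ h1] _]|[]//].
by move/eqP: h.
Qed.

Lemma vert_vertb i : vert_edge v i -> vertb i.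
Proof. by case=> h _; apply/eqP. Qed.
Lemma horiz_horizb i : horiz_edge v i -> horizb i.
Proof. by case=> h _; apply/eqP. Qed.

Definition Sp (p : R * R) (u : 'I_n) : bool := (p.1 < vx v u) && (vy v u <= p.2).

Lemma odd_cross p : odd #|crossings v p| = xs (Sp p).
Proof.
rewrite /crossings xs_odd (xs_edges vertb_alt (Sp p)); apply: xs_ext => i.
rewrite /vertb /Sp; case: eqP => //= ->.
rewrite minmax_xor; by case: (p.1 < _).
Qed.

Lemma interiorE p : interior v p <-> ~ boundary v p /\ xs (Sp p).
Proof. by rewrite /interior odd_cross. Qed.

Lemma xs_vconst (T : pred 'I_n) : (forall f, vertb f -> T f = T (ordS f)) -> xs T = false.
Proof.
move=> h; rewrite (xs_edges vertb_alt T); apply: xs_false => f.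
by case vf: (vertb f) => //=; rewrite h // addbb.
Qed.

Lemma xs_hconst (T : pred 'I_n) : (forall f, horizb f -> T f = T (ordS f)) -> xs T = false.
Proof.
move=> h; rewrite (xs_edges horizb_alt T); apply: xs_false => f.
by case vf: (horizb f) => //=; rewrite h // addbb.
Qed.

End Parity.


Lemma fin_pos_lb (R : realFieldType) (T : finType) (f : T -> R) (P : pred T) :
  (forall t, P t -> 0 < f t) -> exists2 d, 0 < d & forall t, P t -> d <= f t.
Proof.
move=> hp.
suff: forall s : seq T, exists2 d : R, 0 < d & forall t, t \in s -> P t -> d <= f t.
  by case/(_ (enum T)) => d d0 hd; exists d => // t; apply: hd; rewrite mem_enum.
elim=> [|t0 s [d d0 hd]]; first by exists 1.
case Pt0: (P t0).
  exists (Num.min d (f t0)); first by rewrite lt_min d0 hp.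
  move=> t; rewrite in_cons => /orP [/eqP -> _|ts Pt]; first by rewrite ge_min lexx orbT.
  by rewrite ge_min hd.
exists d => // t; rewrite in_cons => /orP [/eqP -> |ts Pt]; first by rewrite Pt0.
exact: hd.
Qed.

Lemma iter_ordS n (i : 'I_n) m : val (iter m (@ordS n) i) = ((i + m) %% n)%N.
Proof.
elim: m => [|m IH] /=; first by rewrite addn0 modn_small.
by rewrite /= IH -addn1 modnDml addn1 addnS.
Qed.

Lemma cyc_exit n (Q : pred 'I_n) i0 i1 : Q i0 -> ~~ Q i1 -> exists i, Q i && ~~ Q (ordS i).
Proof.
move=> q0 q1; case: (boolP [exists i, Q i && ~~ Q (ordS i)]) => [/existsP //|/existsPn H].
have step : forall i, Q i -> Q (ordS i).
  by move=> i qi; move: (H i); rewrite qi /= negbK.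
have all_it : forall m, Q (iter m (@ordS n) i0).
  by elim=> [|m IH] //=; apply: step.
have e : iter (i1 + n - i0) (@ordS n) i0 = i1.
  apply: val_inj; rewrite iter_ordS /= subnKC; last first.
    by apply: leq_trans (ltnW (ltn_ord i0)) (leq_addl _ _).
  by rewrite modnDr modn_small.
by move: (all_it (i1 + n - i0)%N); rewrite e (negbTE q1).
Qed.

Definition btw (R : realFieldType) (a b c : R) : Prop := (a <= c /\ c <= b) \/ (b <= c /\ c <= a).

Lemma seg1 (R : realFieldType) (a b y : R) : a != b -> btw a b y ->
  exists t, (0 <= t <= 1) /\ y = (1 - t) * a + t * b.
Proof.
move=> ab h; have d0 : b - a != 0 by rewrite subr_eq0 eq_sym.
exists ((y - a) / (b - a)); split; last by field.
case: (ltrgtP a b) => [lt|lt|eq]; last by rewrite eq eqxx in ab.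
  have dp : 0 < b - a by rewrite subr_gt0.
  apply/andP; split; first by apply: divr_ge0; case: h => -[]; lra.
  by rewrite ler_pdivrMr // mul1r; case: h => -[]; lra.
have dn : 0 < a - b by rewrite subr_gt0.
rewrite -(divrNN (y - a)) opprB opprB.
apply/andP; split; first by apply: divr_ge0; case: h => -[]; lra.
by rewrite ler_pdivrMr // mul1r; case: h => -[]; lra.
Qed.

Lemma btw_of (R : realFieldType) (a b t : R) : 0 <= t <= 1 -> btw a b ((1 - t) * a + t * b).
Proof.
move=> /andP [t0 t1]; case: (lerP a b) => ab; [left|right]; split; nra.
Qed.

Section Geo.
Variables (R : realFieldType) (n : nat) (v : 'I_n -> R * R).
Hypothesis rect : rectilinear v.
Hypothesis simp : simple_polygon v.

Lemma on_edgeP p i : on_edge v p i ->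
  btw (vx v i) (vx v (ordS i)) p.1 /\ btw (vy v i) (vy v (ordS i)) p.2.
Proof. by case=> t [t01 ->] /=; split; apply: btw_of. Qed.

Lemma on_edge_pt p i : btw (vx v i) (vx v (ordS i)) p.1 -> btw (vy v i) (vy v (ordS i)) p.2 ->
  (vx v i = vx v (ordS i) \/ vy v i = vy v (ordS i)) -> on_edge v p i.
Proof.
case: p => x y /= hx hy [e|e].
  have ne : vy v i != vy v (ordS i).
    by apply/eqP; case: (rect i) => [[[_ ?] _]|[[_ h] _]] //; rewrite e in h.
  case: (seg1 ne hy) => t [t01 ey]; exists t; split => //.
  have -> : x = vx v i by case: hx => -[]; rewrite -e => *; apply/eqP; rewrite eq_le; apply/andP; split.
  by rewrite -ey -e; congr pair; ring.
have ne : vx v i != vx v (ordS i).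
  by apply/eqP; case: (rect i) => [[[h _] _]|[[_ h] _]] //; rewrite e in h.
case: (seg1 ne hx) => t [t01 ex]; exists t; split => //.
have -> : y = vy v i by case: hy => -[]; rewrite -e => *; apply/eqP; rewrite eq_le; apply/andP; split.
by rewrite -ex -e; congr pair; ring.
Qed.

Lemma vertex_on_edge i : on_edge v (v i) i.
Proof. exists 0; split; first by rewrite lexx ler01. by rewrite /vx /vy; case: (v i) => a b /=; congr pair; ring. Qed.

Lemma vertex_on_edge' i : on_edge v (v (ordS i)) i.
Proof. exists 1; split; first by rewrite lexx ler01. by rewrite /vx /vy; case: (v (ordS i)) => a b /=; congr pair; ring. Qed.

Lemma edge_nondeg i : v i <> v (ordS i).
Proof.
move=> e; case: (rect i) => [[[_ h] _]|[[_ h] _]]; apply: h; by rewrite /vx /vy e.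
Qed.

Lemma simple_pt i f p : on_edge v p i -> on_edge v p f -> f <> i -> p = v i \/ p = v (ordS i).
Proof.
move=> hi hf ne; case: (simp (nesym ne) hi hf) => [[-> ->]|[_ ->]]; [right|left] => //.
Qed.

Lemma vertex_edges w f : on_edge v (v w) f -> f = w \/ f = ord_pred w.
Proof.
move=> hf; case: (f =P w) => [->|ne]; first by left.
case: (simp (nesym ne) (vertex_on_edge w) hf) => [[ef e]|[ew _]].
  by case: (edge_nondeg (i:=w)); rewrite e ef.
by right; rewrite ew ordSK.
Qed.

End Geo.


Lemma xorE (a b c : bool) : a (+) b = c -> a = b (+) c.
Proof. by case: a; case: b; case: c. Qed.

Lemma lt_xor (R : realFieldType) (x1 x2 a : R) : x1 <= x2 -> (x1 < a) (+) (x2 < a) = (x1 < a <= x2).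
Proof.
move=> h; case: (ltP x1 a) => h1; case: (ltP x2 a) => h2 //=; try lra.
Qed.

Lemma le_xor (R : realFieldType) (y1 y2 a : R) : y1 <= y2 -> (a <= y1) (+) (a <= y2) = (y1 < a <= y2).
Proof.
move=> h; case: (leP a y1) => h1; case: (leP a y2) => h2 //=; try lra.
Qed.

Section Moves.
Variables (R : realFieldType) (n : nat) (v : 'I_n -> R * R).
Hypothesis rect : rectilinear v.

Lemma xs_hmove x1 x2 y : x1 <= x2 ->
  xs (Sp v (x1, y)) = xs (Sp v (x2, y)) (+)
    xs (fun f => vertb v f && (x1 < vx v f <= x2) && ((vy v f <= y) (+) (vy v (ordS f) <= y))).
Proof.
move=> le12; apply: xorE; rewrite -xsD.
rewrite (xs_edges (vertb_alt rect)); apply: xs_ext => f.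
rewrite /Sp /vertb /=; case: eqP => //= ->.
rewrite -(lt_xor _ le12).
by case: (x1 < _); case: (x2 < _); case: (vy v f <= y); case: (_ <= y).
Qed.


Lemma xs_vmove x y1 y2 : y1 <= y2 ->
  xs (Sp v (x, y1)) = xs (Sp v (x, y2)) (+)
    xs (fun f => horizb v f && (y1 < vy v f <= y2) && ((x < vx v f) (+) (x < vx v (ordS f)))).
Proof.
move=> le12; apply: xorE; rewrite -xsD.
rewrite (xs_edges (horizb_alt rect)); apply: xs_ext => f.
rewrite /Sp /horizb /=; case: eqP => //= ->.
rewrite -(le_xor _ le12).
by case: (x < _); case: (x < _); case: (_ <= y1); case: (_ <= y2).
Qed.

Lemma xs_hconst_y (Y : R -> bool) : xs (fun u => Y (vy v u)) = false.
Proof. by apply: (xs_hconst rect) => f /eqP ->. Qed.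

Lemma xs_vconst_x (X : R -> bool) : xs (fun u => X (vx v u)) = false.
Proof. by apply: (xs_vconst rect) => f /eqP ->. Qed.

End Moves.


Lemma btw_eq (R : realFieldType) (a c : R) : btw a a c -> c = a.
Proof. by case=> -[h1 h2]; apply/eqP; rewrite eq_le; apply/andP; split. Qed.

Lemma btw_sym (R : realFieldType) (a b c : R) : btw a b c -> btw b a c.
Proof. by case=> h; [right|left]. Qed.

Section Corner.
Variables (R : realFieldType) (n : nat) (v : 'I_n -> R * R).
Hypothesis rect : rectilinear v.
Hypothesis simp : simple_polygon v.

Definition nbh w := if vertb v w then ord_pred w else ordS w.
Definition nbv w := if vertb v w then ordS w else ord_pred w.
Definition ev w := if vertb v w then w else ord_pred w.
Definition eh w := if vertb v w then ord_pred w else w.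

Lemma vertb_pred w : vertb v (ord_pred w) = ~~ vertb v w.
Proof. by have := vertb_alt rect w; case: (vertb v w); case: (vertb v (ord_pred w)). Qed.

Lemma ev_vert w : vertb v (ev w).
Proof. by rewrite /ev; case: ifP => // /negbT; rewrite vertb_pred. Qed.

Lemma eh_horiz w : horizb v (eh w).
Proof.
rewrite /eh -[horizb _ _]negbK -(vertbE rect); case: ifP => [h|->//].
by rewrite vertb_pred h.
Qed.

Lemma ev_ends w : (ev w = w /\ ordS (ev w) = nbv w) \/ (ev w = nbv w /\ ordS (ev w) = w).
Proof. by rewrite /ev /nbv; case: ifP => _; [left|right]; rewrite ?ord_predK. Qed.

Lemma eh_ends w : (eh w = w /\ ordS (eh w) = nbh w) \/ (eh w = nbh w /\ ordS (eh w) = w).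
Proof. by rewrite /eh /nbh; case: ifP => _; [right|left]; rewrite ?ord_predK. Qed.

Lemma nbv_x w : vx v (nbv w) = vx v w.
Proof.
have /eqP := ev_vert w; case: (ev_ends w) => -[e1 e2]; rewrite e2 e1 => // ->.
Qed.

Lemma nbv_y w : vy v (nbv w) <> vy v w.
Proof.
have [_ h] := vertb_vert rect (ev_vert w); case: (ev_ends w) => -[e1 e2]; rewrite e2 e1 in h => //.
by move=> e; apply: h.
Qed.

Lemma nbh_y w : vy v (nbh w) = vy v w.
Proof.
have /eqP := eh_horiz w; case: (eh_ends w) => -[e1 e2]; rewrite e2 e1 => // ->.
Qed.

Lemma nbh_x w : vx v (nbh w) <> vx v w.
Proof.
have [_ h] := horizb_horiz rect (eh_horiz w); case: (eh_ends w) => -[e1 e2]; rewrite e2 e1 in h => //.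
by move=> e; apply: h.
Qed.

Lemma vedge_thru w f : vertb v f -> on_edge v (v w) f -> f = ev w.
Proof.
move=> vf /(vertex_edges rect simp) [e|e]; subst f; rewrite /ev.
  by rewrite vf.
by move: vf; rewrite vertb_pred => /negbTE ->.
Qed.

Lemma hedge_thru w f : horizb v f -> on_edge v (v w) f -> f = eh w.
Proof.
move=> hf /(vertex_edges rect simp) [e|e]; subst f; rewrite /eh; move: hf.
  by rewrite -[horizb _ _]negbK -(vertbE rect) => /negbTE ->.
by rewrite -[horizb _ _]negbK -(vertbE rect) vertb_pred negbK => ->.
Qed.

Lemma vpt w : v w = (vx v w, vy v w).
Proof. by rewrite /vx /vy; case: (v w). Qed.

Lemma on_ev w p : p.1 = vx v w -> btw (vy v w) (vy v (nbv w)) p.2 -> on_edge v p (ev w).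
Proof.
move=> e1 e2; apply: on_edge_pt => //; last by left; have /eqP := ev_vert w.
- case: (ev_ends w) => -[-> ->]; rewrite e1 ?nbv_x; left; rewrite lexx //.
- by case: (ev_ends w) => -[-> ->] //; apply: btw_sym.
Qed.

Lemma on_eh w p : btw (vx v w) (vx v (nbh w)) p.1 -> p.2 = vy v w -> on_edge v p (eh w).
Proof.
move=> e1 e2; apply: on_edge_pt => //; last by right; have /eqP := eh_horiz w.
- by case: (eh_ends w) => -[-> ->] //; apply: btw_sym.
- case: (eh_ends w) => -[-> ->]; rewrite e2 ?nbh_y; left; rewrite lexx //.
Qed.

Lemma not_bnd p : (forall u, vx v u <> p.1) -> (forall u, vy v u <> p.2) -> ~ boundary v p.
Proof.
move=> hx hy [i /on_edgeP [bx by_]].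
case: (rect i) => [[[e _] _]|[[e _] _]].
  by rewrite -e in bx; apply: (hx i); rewrite (btw_eq bx).
by rewrite -e in by_; apply: (hy i); rewrite (btw_eq by_).
Qed.

Definition gap (d : R) := 0 < d /\ (forall u w, vx v u < vx v w -> d <= vx v w - vx v u)
  /\ (forall u w, vy v u < vy v w -> d <= vy v w - vy v u).

Lemma gap_exists : exists d, gap d.
Proof.
have [dx dx0 hx] := @fin_pos_lb R _ (fun p : 'I_n * 'I_n => vx v p.2 - vx v p.1)
  (fun p => vx v p.1 < vx v p.2) (fun p h => ltac:(rewrite subr_gt0; exact h)).
have [dy dy0 hy] := @fin_pos_lb R _ (fun p : 'I_n * 'I_n => vy v p.2 - vy v p.1)
  (fun p => vy v p.1 < vy v p.2) (fun p h => ltac:(rewrite subr_gt0; exact h)).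
exists (Num.min dx dy); split; first by rewrite lt_min dx0 dy0.
split=> u w h.
  by apply: le_trans (hx (u, w) h); rewrite ge_min lexx.
by apply: le_trans (hy (u, w) h); rewrite ge_min lexx orbT.
Qed.

Variable d : R.
Hypothesis gd : gap d.

Lemma d_pos : 0 < d. Proof. by case: gd. Qed.

Lemma gapx u w : vx v w - d < vx v u -> vx v u < vx v w + d -> vx v u = vx v w.
Proof.
case: gd => _ [gx _] h1 h2; case: (ltrgtP (vx v u) (vx v w)) => // h.
  by have := gx _ _ h; lra.
by have := gx _ _ h; lra.
Qed.

Lemma gapy u w : vy v w - d < vy v u -> vy v u < vy v w + d -> vy v u = vy v w.
Proof.
case: gd => _ [_ gy] h1 h2; case: (ltrgtP (vy v u) (vy v w)) => // h.
  by have := gy _ _ h; lra.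
by have := gy _ _ h; lra.
Qed.

End Corner.


Section Cross.
Variables (R : realFieldType) (n : nat) (v : 'I_n -> R * R).
Hypothesis rect : rectilinear v.
Hypothesis simp : simple_polygon v.
Variable d : R.
Hypothesis gd : gap v d.

Lemma gy_le u w y : vy v u <= y -> y < vy v w + d -> vy v u <= vy v w.
Proof. case: gd => _ [_ gy] h1 h2; case: (lerP (vy v u) (vy v w)) => // h; have := gy _ _ h; lra. Qed.
Lemma gy_gt u w y : y < vy v u -> vy v w - d < y -> vy v w <= vy v u.
Proof. case: gd => _ [_ gy] h1 h2; case: (lerP (vy v w) (vy v u)) => // h; have := gy _ _ h; lra. Qed.
Lemma gx_le u w x : vx v u <= x -> x < vx v w + d -> vx v u <= vx v w.
Proof. case: gd => _ [gx _] h1 h2; case: (lerP (vx v u) (vx v w)) => // h; have := gx _ _ h; lra. Qed.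
Lemma gx_gt u w x : x < vx v u -> vx v w - d < x -> vx v w <= vx v u.
Proof. case: gd => _ [gx _] h1 h2; case: (lerP (vx v w) (vx v u)) => // h; have := gx _ _ h; lra. Qed.

Lemma straddle_y f g w y : (vy v f <= y) (+) (vy v g <= y) -> vy v w - d < y -> y < vy v w + d ->
  btw (vy v f) (vy v g) (vy v w).
Proof.
move=> s h1 h2; case: (leP (vy v f) y) s => hf; case: (leP (vy v g) y) => hg //= _.
  left; split; [exact: gy_le hf h2| exact: gy_gt hg h1].
right; split; [exact: gy_le hg h2| exact: gy_gt hf h1].
Qed.

Lemma straddle_x f g w x : (x < vx v f) (+) (x < vx v g) -> vx v w - d < x -> x < vx v w + d ->
  btw (vx v f) (vx v g) (vx v w).
Proof.
move=> s h1 h2; case: (ltP x (vx v f)) s => hf; case: (ltP x (vx v g)) => hg //= _.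
  right; split; [exact: gx_le hg h2| exact: gx_gt hf h1].
left; split; [exact: gx_le hf h2| exact: gx_gt hg h1].
Qed.

Lemma ev_x w : vx v (ev v w) = vx v w.
Proof. by case: (ev_ends v w) => -[-> _]; rewrite ?nbv_x. Qed.
Lemma eh_y w : vy v (eh v w) = vy v w.
Proof. by case: (eh_ends v w) => -[-> _]; rewrite ?nbh_y. Qed.

Lemma ev_straddle w y : (vy v (ev v w) <= y) (+) (vy v (ordS (ev v w)) <= y) =
  (vy v w <= y) (+) (vy v (nbv v w) <= y).
Proof. by case: (ev_ends v w) => -[-> ->] //; rewrite addbC. Qed.
Lemma eh_straddle w x : (x < vx v (eh v w)) (+) (x < vx v (ordS (eh v w))) =
  (x < vx v w) (+) (x < vx v (nbh v w)).
Proof. by case: (eh_ends v w) => -[-> ->] //; rewrite addbC. Qed.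

Lemma hcross w x1 x2 y : vx v w - d < x1 -> x1 < vx v w -> vx v w <= x2 -> x2 < vx v w + d ->
  vy v w - d < y -> y < vy v w + d ->
  xs (Sp v (x1, y)) = xs (Sp v (x2, y)) (+) ((vy v w <= y) (+) (vy v (nbv v w) <= y)).
Proof.
move=> a1 a2 a3 a4 b1 b2.
rewrite (xs_hmove rect _ _ (x1 := x1) (x2 := x2)); last by lra.
congr addb; rewrite (xs_one (k := ev v w)).
  by rewrite ev_vert // ev_x a2 a3 /= ev_straddle.
move=> f /andP [/andP [vf /andP [f1 f2]] st].
apply: (vedge_thru rect simp) => //; rewrite vpt; apply: (on_edge_pt rect) => /=.
- have e1 : vx v f = vx v w by apply: (gapx gd); lra.
  have e2 : vx v (ordS f) = vx v w by rewrite -e1; apply/esym/eqP.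
  by rewrite e1 e2; left; rewrite lexx.
- exact: straddle_y st b1 b2.
- by left; apply/eqP.
Qed.

Lemma vcross w x y1 y2 : vx v w - d < x -> x < vx v w + d ->
  vy v w - d < y1 -> y1 < vy v w -> vy v w <= y2 -> y2 < vy v w + d ->
  xs (Sp v (x, y1)) = xs (Sp v (x, y2)) (+) ((x < vx v w) (+) (x < vx v (nbh v w))).
Proof.
move=> a1 a2 b1 b2 b3 b4.
rewrite (xs_vmove rect _ (y1 := y1) (y2 := y2)); last by lra.
congr addb; rewrite (xs_one (k := eh v w)).
  by rewrite eh_horiz // eh_y b2 b3 /= eh_straddle.
move=> f /andP [/andP [hf /andP [f1 f2]] st].
apply: (hedge_thru rect simp) => //; rewrite vpt; apply: (on_edge_pt rect) => /=.
- exact: straddle_x st a1 a2.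
- have e1 : vy v f = vy v w by apply: (gapy gd); lra.
  have e2 : vy v (ordS f) = vy v w by rewrite -e1; apply/esym/eqP.
  by rewrite e1 e2; left; rewrite lexx.
- by right; apply/eqP.
Qed.

End Cross.


Lemma small_mul (R : realFieldType) (c dd : R) : 0 < dd ->
  exists2 e, 0 < e & forall a, 0 < a < e -> - dd < a * c < dd.
Proof.
move=> d0; case: (lerP 0 c) => c0.
  exists (dd / (c + 1)); first by apply: divr_gt0; lra.
  move=> a /andP [a0]; rewrite ltr_pdivlMr; last by lra.
  move=> h; apply/andP; split; nra.
exists (dd / (1 - c)); first by apply: divr_gt0; lra.
move=> a /andP [a0]; rewrite ltr_pdivlMr; last by lra.
move=> h; apply/andP; split; nra.
Qed.

Lemma fin_argmin (R : realFieldType) (T : finType) (f : T -> R) (t0 : T) :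
  exists t, forall u, f t <= f u.
Proof.
suff: forall s : seq T, exists t, forall u, u \in s -> f t <= f u.
  by case/(_ (enum T)) => t ht; exists t => u; apply: ht; rewrite mem_enum.
elim=> [|a s [t ht]]; first by exists t0.
case: (lerP (f a) (f t)) => h.
  exists a => u; rewrite in_cons => /orP [/eqP ->|us]; first by rewrite lexx.
  by apply: le_trans h (ht _ us).
exists t => u; rewrite in_cons => /orP [/eqP ->|us]; [exact: ltW | exact: ht].
Qed.

Lemma fin_argmax (R : realFieldType) (T : finType) (f : T -> R) (t0 : T) :
  exists t, forall u, f u <= f t.
Proof.
have [t ht] := fin_argmin (fun t => - f t) t0.
by exists t => u; have := ht u; rewrite lerN2.
Qed.

Section Knob.
Variables (R : realFieldType) (n : nat) (v : 'I_n -> R * R).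
Hypothesis rect : rectilinear v.
Hypothesis simp : simple_polygon v.

Lemma convex_iff w : convex_vertex v w <->
  exists2 eps, 0 < eps & forall a b, 0 < a < eps -> 0 < b < eps ->
    interior v (vx v w + a * (vx v (nbh v w) - vx v w), vy v w + b * (vy v (nbv v w) - vy v w)).
Proof.
rewrite /convex_vertex /nbh /nbv.
case vw: (vertb v w).
  have e1 : vx v (ordS w) = vx v w by apply/esym/eqP.
  have e2 : vy v (ord_pred w) = vy v w.
    have : horizb v (ord_pred w) by rewrite -[horizb _ _]negbK -(vertbE rect) vertb_pred // vw.
    by rewrite /horizb ord_predK => /eqP.
  split=> -[eps e0 h]; exists eps => // s t hs ht; move: (h s t hs ht);
    by rewrite e1 e2 !subrr !mulr0 !addr0.
have e1 : vy v (ordS w) = vy v w.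
  have : horizb v w by rewrite -[horizb _ _]negbK -(vertbE rect) vw.
  by move/eqP.
have e2 : vx v (ord_pred w) = vx v w.
  have : vertb v (ord_pred w) by rewrite vertb_pred // vw.
  by rewrite /vertb ord_predK => /eqP.
split=> -[eps e0 h]; exists eps => // s t hs ht; move: (h t s ht hs);
  by rewrite e1 e2 !subrr !mulr0 !addr0.
Qed.

End Knob.


Lemma pick2 (R : realFieldType) (x y : R) : 0 < x -> 0 < y -> exists a, 0 < a /\ a < x /\ a < y.
Proof.
move=> x0 y0; exists (Num.min x y / 2).
have h1 : Num.min x y <= x by rewrite ge_min lexx.
have h2 : Num.min x y <= y by rewrite ge_min lexx orbT.
have h3 : 0 < Num.min x y by rewrite lt_min x0 y0.
lra.
Qed.

Lemma minmax_strict (R : realFieldType) (a b y : R) :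
  (a < y /\ y < b) \/ (b < y /\ y < a) -> Num.min a b < y < Num.max a b.
Proof. by rewrite gt_min lt_max => -[[h1 h2]|[h1 h2]]; rewrite h1 h2 ?orbT. Qed.

Lemma minmax_strict' (R : realFieldType) (a b y : R) :
  Num.min a b < y < Num.max a b -> (a < y /\ y < b) \/ (b < y /\ y < a).
Proof.
rewrite gt_min lt_max => /andP [h1 h2].
case: (ltP a y) h1 => ha /= h1; case: (ltP y b) h2 => hb /= h2; try lra.
Qed.

Lemma half_le (R : realFieldType) (d l y : R) : d <= l - y -> 0 < d -> y <= l - d / 2 <= l.
Proof. move=> h1 h2; apply/andP; split; lra. Qed.

Section Left.
Variables (R : realFieldType) (n : nat) (v : 'I_n -> R * R).
Hypothesis rect : rectilinear v.
Hypothesis simp : simple_polygon v.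
Variable d : R.
Hypothesis gd : gap v d.

Lemma ev_range w y : (vy v w < y /\ y < vy v (nbv v w)) \/ (vy v (nbv v w) < y /\ y < vy v w) ->
  Num.min (vy v (ev v w)) (vy v (ordS (ev v w))) < y < Num.max (vy v (ev v w)) (vy v (ordS (ev v w))).
Proof.
move=> h; apply: minmax_strict; case: (ev_ends v w) => -[-> ->] //.
by case: h => -[]; [right|left].
Qed.

Lemma inP_bnd p i : on_edge v p i -> inP v p.
Proof. by move=> h; left; exists i. Qed.

Lemma notinP_xs p : ~ inP v p -> xs (Sp v p) = false.
Proof.
move=> h; case E: (xs (Sp v p)) => //; exfalso.
have nb : ~ boundary v p by move=> hb; apply: h; left.
by apply: h; right; apply/(interiorE rect); split.
Qed.

Lemma lk_dir k w : left_knob v k -> (w = k \/ w = ordS k) ->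
  [/\ ev v w = k, convex_vertex v w & vx v w < vx v (nbh v w)].
Proof.
move=> [[ck ck'] [vk [eps0 e0 lo]]] hw.
have ew : ev v w = k.
  apply/esym/(vedge_thru rect simp); first exact: vert_vertb.
  by case: hw => ->; [apply: vertex_on_edge | apply: vertex_on_edge'].
have cw : convex_vertex v w by case: hw => ->.
split => //; case: (ltrgtP (vx v w) (vx v (nbh v w))) => // [hlt|heq]; last first.
  by case: (nbh_x rect (w := w)).
exfalso; move/(convex_iff rect): cw => [eps1 e1 hin].
set dx := vx v (nbh v w) - vx v w.
have [e e00 he] := small_mul dx e0.
have [a [a0 [a1 a2]]] := pick2 e1 e00.
have [b [b0 [b1 b2]]] := pick2 e1 (@ltr01 R).
have := hin a b (ltac:(by rewrite a0 a1)) (ltac:(by rewrite b0 b1)).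
set y := vy v w + b * (vy v (nbv v w) - vy v w).
have hy : Num.min (vy v k) (vy v (ordS k)) < y < Num.max (vy v k) (vy v (ordS k)).
  rewrite -ew; apply: ev_range; rewrite /y.
  have ne := nbv_y rect (w := w).
  case: (ltrgtP (vy v w) (vy v (nbv v w))) => h; [left|right|by case: ne]; split; nra.
have /andP [t1 t2] := he a (ltac:(by rewrite a0 a2)).
have hdx : dx < 0 by rewrite /dx; lra.
have := lo (- (a * dx)) y (ltac:(apply/andP; split; nra)) hy.
rewrite -ew ev_x // opprK => h hint; apply: h; right; exact: hint.
Qed.


Lemma below_corner w s t : 0 < s < d -> 0 < t < d -> vx v w + s < vx v (nbh v w) ->
  interior v (vx v w + s, vy v w + t) -> ~ inP v (vx v w + s, vy v w - d / 2).
Proof.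
move=> /andP [s0 sd] /andP [t0 td] hn hint.
have d0 := d_pos gd.
have nb : ~ boundary v (vx v w + s, vy v w - d / 2).
  apply: (not_bnd rect) => u /= e.
    by have := gapx gd (u := u) (w := w); rewrite e => /(_ ltac:(lra) ltac:(lra)); lra.
  by have := gapy gd (u := u) (w := w); rewrite e => /(_ ltac:(lra) ltac:(lra)); lra.
have hx : xs (Sp v (vx v w + s, vy v w - d / 2)) = false.
  have hv := @vcross _ _ v rect simp d gd w (vx v w + s) (vy v w - d / 2) (vy v w + t).
  rewrite hv; [|lra ..].
  have [_ ->] := (interiorE rect _).1 hint.
  have -> : (vx v w + s < vx v w) = false by apply/negbTE; rewrite -leNgt; lra.
  by rewrite hn.
by case=> // /(interiorE rect) [_]; rewrite hx.
Qed.

Lemma btw_shift (b x1 x2 r : R) : 0 < r < d -> btw x1 x2 (b - r) ->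
  (x1 < b -> d <= b - x1) -> (x2 < b -> d <= b - x2) -> btw x1 x2 b \/ (x1 < b /\ x2 < b).
Proof.
move=> /andP [r0 rd] [[h1 h2]|[h1 h2]] g1 g2.
  case: (ltP x2 b) => h3; last by left; left; split; lra.
  by have := g2 h3; lra.
case: (ltP x1 b) => h3; last by left; right; split; lra.
by have := g1 h3; lra.
Qed.

Lemma left_corner w r : 0 < r < d -> vx v w < vx v (nbh v w) -> vy v w + d / 2 < vy v (nbv v w) ->
  ~ inP v (vx v w - r, vy v w + d / 2) -> ~ inP v (vx v w - r, vy v w).
Proof.
move=> /andP [r0 rd] hn hup lo.
have d0 := d_pos gd.
have [_ [gx gy]] := gd.
have nb : ~ boundary v (vx v w - r, vy v w).
  move=> [f /on_edgeP [bx by_]] /=; simpl in bx, by_.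
  case: (rect f) => [[[ef _] _]|[[ef _] _]].
    rewrite -ef in bx; have e := btw_eq bx.
    by have := gapx gd (u := f) (w := w); rewrite -e => /(_ ltac:(lra) ltac:(lra)); lra.
  rewrite -ef in by_; have e := btw_eq by_.
  have hf : horizb v f by apply/eqP.
  have g1 : vx v f < vx v w -> d <= vx v w - vx v f by apply: gx.
  have g2 : vx v (ordS f) < vx v w -> d <= vx v w - vx v (ordS f) by apply: gx.
  have rr : 0 < r < d by rewrite r0 rd.
  case: (btw_shift rr bx g1 g2) => [bw|[l1 l2]]; last first.
    by case: bx => -[]; lra.
  have onw : on_edge v (v w) f.
    rewrite vpt; apply: (on_edge_pt rect) => //=; last by right.
    by rewrite e -ef; left; rewrite lexx.
  have ef2 := hedge_thru rect simp hf onw.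
  case: (eh_ends v w) => -[q1 q2]; rewrite ef2 q2 q1 in bx; case: bx => -[]; lra.
have hx : xs (Sp v (vx v w - r, vy v w)) = false.
  have hv := @xs_vmove _ _ v rect (vx v w - r) (vy v w) (vy v w + d / 2).
  rewrite hv; last by lra.
  rewrite [X in _ (+) X]xs_false ?addbF; first exact: notinP_xs.
  move=> f; case: (horizb v f) => //=; case hl: (vy v w < vy v f) => //=.
  case hh: (vy v f <= vy v w + d / 2) => //=.
  by have := gapy gd (u := f) (w := w) => /(_ ltac:(lra) ltac:(lra)); lra.
by case=> // /(interiorE rect) [_]; rewrite hx.
Qed.

Lemma qwalk k w s r u0 : ortho_convex v -> ev v w = k -> vy v w < vy v (nbv v w) ->
  vx v w < vx v (nbh v w) -> 0 < s < d -> 0 < r < d ->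
  ~ inP v (vx v w + s, vy v w - d / 2) -> ~ inP v (vx v w - r, vy v w) ->
  vx v u0 <= vx v w -> vy v u0 < vy v w -> False.
Proof.
move=> [ocx ocy] ew hb hdir /andP [s0 sd] /andP [r0 rd] L1 L2 hx0 hy0.
have [d0 [gx gy]] := gd.
have gdx := gx _ _ hdir.
have q0 : (vx v u0 < vx v w + s) && (vy v u0 < vy v w) by apply/andP; split; lra.
have q1 : ~~ ((vx v w < vx v w + s) && (vy v w < vy v w)) by rewrite ltxx andbF.
have [i /andP [qi nqi]] := @cyc_exit n (fun i => (vx v i < vx v w + s) && (vy v i < vy v w)) u0 w q0 q1.
move/andP: qi => [qx qy].
have inw : inP v (vx v w, vy v w) by rewrite -vpt; apply: (inP_bnd (vertex_on_edge v w)).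
case: (rect i) => [[[exi _] _]|[[eyi _] _]].
  have hy1 : vy v w <= vy v (ordS i) by move: nqi; rewrite -exi qx /= -leNgt.
  have on_i : on_edge v (vx v i, vy v w) i.
    apply: (on_edge_pt rect) => /=; last by left.
      by rewrite -exi; left; rewrite lexx.
    by left; split; lra.
  case: (ltrgtP (vx v i) (vx v w)) => hxb.
  - have gb := gx _ _ hxb.
    apply: L2; apply: (ocx _ (vx v i) (vx v w) _ (inP_bnd on_i) inw); apply/andP; split; lra.
  - by have := gapx gd (u := i) (w := w) => /(_ ltac:(lra) ltac:(lra)); lra.
  - have onw : on_edge v (v w) i by rewrite vpt -hxb.
    have := vedge_thru rect simp (introT eqP exi) onw; rewrite ew => eik.
    case: (ev_ends v w) => -[q2 _]; rewrite ew in q2; rewrite eik q2 in qy.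
      by rewrite ltxx in qy.
    by move: (lt_trans hb qy); rewrite ltxx.
have hx1 : vx v w + s <= vx v (ordS i) by move: nqi; rewrite -eyi qy andbT -leNgt.
have on_i : on_edge v (vx v w + s, vy v i) i.
  apply: (on_edge_pt rect) => /=; last by right.
    by left; split; lra.
  by rewrite -eyi; left; rewrite lexx.
have inb : inP v (vx v w + s, vy v w).
  apply: (inP_bnd (i := eh v w)); apply: on_eh => //=; left; split; lra.
have gb := gy _ _ qy.
apply: L1; apply: (ocy _ (vy v i) (vy v w) _ (inP_bnd on_i) inb).
by apply: half_le.
Qed.

Lemma no_lower_left k w u0 : ortho_convex v -> left_knob v k -> (w = k \/ w = ordS k) ->
  vy v w < vy v (nbv v w) -> vx v u0 <= vx v w -> vy v u0 < vy v w -> False.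
Proof.
move=> oc lk hw hb hx0 hy0.
have [ew cw hdir] := lk_dir lk hw.
have [_ [vk [eps0 e0 lo]]] := lk.
have [d0 [gx gy]] := gd.
have ghl := gy _ _ hb.
have gdx := gx _ _ hdir.
move/(convex_iff rect): cw => [eps1 e1 hin].
have [e2 e20 he2] := small_mul (vx v (nbh v w) - vx v w) d0.
have [e3 e30 he3] := small_mul (vy v (nbv v w) - vy v w) d0.
have [a [a0 [a1 a2]]] := pick2 e1 e20.
have [c [c0 [c1 c2]]] := pick2 e1 e30.
have hint := hin a c (ltac:(by rewrite a0 a1)) (ltac:(by rewrite c0 c1)).
have /andP [_ sd] := he2 a (ltac:(by rewrite a0 a2)).
have /andP [_ td] := he3 c (ltac:(by rewrite c0 c2)).
have s0 : 0 < a * (vx v (nbh v w) - vx v w) by apply: mulr_gt0; lra.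
have t0 : 0 < c * (vy v (nbv v w) - vy v w) by apply: mulr_gt0; lra.
have [r [r0 [rd re]]] := pick2 d0 e0.
have ss : 0 < a * (vx v (nbh v w) - vx v w) < d by rewrite s0 sd.
have tt : 0 < c * (vy v (nbv v w) - vy v w) < d by rewrite t0 td.
have rr : 0 < r < d by rewrite r0 rd.
have hn : vx v w + a * (vx v (nbh v w) - vx v w) < vx v (nbh v w) by lra.
have L1 := below_corner ss tt hn hint.
have ek : vx v k = vx v w by rewrite -ew ev_x.
have L2 : ~ inP v (vx v w - r, vy v w).
  apply: left_corner => //; first lra.
  rewrite -ek; apply: lo; first by rewrite r0 re.
  rewrite -ew; apply: ev_range; left; lra.
exact: (qwalk oc ew hb hdir ss rr L1 L2 hx0 hy0).
Qed.

End Left.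


Section Left2.
Variables (R : realFieldType) (n : nat) (v : 'I_n -> R * R).
Hypothesis rect : rectilinear v.
Hypothesis simp : simple_polygon v.
Variable d : R.
Hypothesis gd : gap v d.

Lemma corner_pt w M : convex_vertex v w -> 0 < M -> exists a c, [/\ 0 < a, 0 < c,
  - M < a * (vx v (nbh v w) - vx v w) < M, - M < c * (vy v (nbv v w) - vy v w) < M &
  interior v (vx v w + a * (vx v (nbh v w) - vx v w), vy v w + c * (vy v (nbv v w) - vy v w))].
Proof.
move=> /(convex_iff rect) [eps1 e1 hin] M0.
have [e2 e20 he2] := small_mul (vx v (nbh v w) - vx v w) M0.
have [e3 e30 he3] := small_mul (vy v (nbv v w) - vy v w) M0.
have [a [a0 [a1 a2]]] := pick2 e1 e20.
have [c [c0 [c1 c2]]] := pick2 e1 e30.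
exists a, c; split => //.
- by apply: he2; rewrite a0 a2.
- by apply: he3; rewrite c0 c2.
- by apply: hin; [rewrite a0 a1 | rewrite c0 c1].
Qed.

Lemma vstraddle_true w c : 0 < c -> - d < c * (vy v (nbv v w) - vy v w) < d ->
  (vy v w <= vy v w + c * (vy v (nbv v w) - vy v w)) (+)
  (vy v (nbv v w) <= vy v w + c * (vy v (nbv v w) - vy v w)) = true.
Proof.
move=> c0 /andP [h1 h2]; have [d0 [_ gy]] := gd.
have ne := nbv_y rect (w := w).
case: (ltrgtP (vy v w) (vy v (nbv v w))) => h; last by case: ne.
  have := gy _ _ h => g.
  have p : 0 < c * (vy v (nbv v w) - vy v w) by apply: mulr_gt0; lra.
  have -> : vy v w <= vy v w + c * (vy v (nbv v w) - vy v w) by lra.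
  by have -> : vy v (nbv v w) <= vy v w + c * (vy v (nbv v w) - vy v w) = false
    by apply/negbTE; rewrite -ltNge; lra.
have := gy _ _ h => g.
have p : c * (vy v (nbv v w) - vy v w) < 0 by rewrite pmulr_rlt0 //; lra.
have -> : vy v w <= vy v w + c * (vy v (nbv v w) - vy v w) = false
  by apply/negbTE; rewrite -ltNge; lra.
by have -> : vy v (nbv v w) <= vy v w + c * (vy v (nbv v w) - vy v w) by lra.
Qed.

Lemma conv_min w : (forall u, vx v w <= vx v u) -> convex_vertex v w.
Proof.
move=> hmin; apply/(convex_iff rect).
have [d0 [gx gy]] := gd.
have hdx : vx v w < vx v (nbh v w).
  have h1 := hmin (nbh v w); have h2 := nbh_x rect (w := w).
  case: (ltrgtP (vx v w) (vx v (nbh v w))) => // h; first by lra.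
  by case: h2.
have [e2 e20 he2] := small_mul (vx v (nbh v w) - vx v w) d0.
have [e3 e30 he3] := small_mul (vy v (nbv v w) - vy v w) d0.
have [eps [e0 [ea ec]]] := pick2 e20 e30.
exists eps => // a c /andP [a0 a1] /andP [c0 c1].
have /andP [ha1 ha2] := he2 a (ltac:(rewrite a0; lra)).
have hc := he3 c (ltac:(rewrite c0; lra)).
have /andP [hc1 hc2] := hc.
have pa : 0 < a * (vx v (nbh v w) - vx v w) by apply: mulr_gt0; lra.
have nc : c * (vy v (nbv v w) - vy v w) != 0.
  apply: mulf_neq0; first by rewrite gt_eqF.
  by rewrite subr_eq0; apply/eqP; exact: nbv_y.
apply/(interiorE rect); split.
  apply: (not_bnd rect) => u /= e.
    by have := gapx gd (u := u) (w := w); rewrite e => /(_ ltac:(lra) ltac:(lra)); lra.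
  have := gapy gd (u := u) (w := w); rewrite e => /(_ ltac:(lra) ltac:(lra)) h.
  have z : c * (vy v (nbv v w) - vy v w) = 0 by lra.
  by rewrite z eqxx in nc.
have hv := @hcross _ _ v rect simp d gd w (vx v w - d / 2) (vx v w + a * (vx v (nbh v w) - vx v w))
  (vy v w + c * (vy v (nbv v w) - vy v w)).
move: hv; rewrite vstraddle_true // addbT => hv.
have hf : xs (Sp v (vx v w - d / 2, vy v w + c * (vy v (nbv v w) - vy v w))) = false.
  rewrite (xs_ext (T := fun u => (fun y => y <= vy v w + c * (vy v (nbv v w) - vy v w)) (vy v u))).
    exact: (xs_hconst_y rect (fun y => y <= vy v w + c * (vy v (nbv v w) - vy v w))).
  move=> u; rewrite /Sp /=; have := hmin u => hu.
  by have -> : vx v w - d / 2 < vx v u by lra.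
rewrite hv in hf; [by apply: negbFE | lra ..].
Qed.


Lemma exists_left : (0 < n)%N -> exists k, left_knob v k.
Proof.
move=> n0; have [u hu] := fin_argmin (fun i => vx v i) (Ordinal n0).
have ex := ev_x rect u.
have ex' : vx v (ordS (ev v u)) = vx v u by rewrite -ex; apply/esym/eqP; apply: ev_vert.
exists (ev v u); split; [split|split].
- by apply: conv_min => u'; rewrite ex.
- by apply: conv_min => u'; rewrite ex'.
- by apply: (vertb_vert rect); apply: ev_vert.
exists 1 => // t y /andP [t0 _] _ [[i /on_edgeP [bx _]]|hi].
  rewrite /= in bx; by have := hu i; have := hu (ordS i); rewrite ex in bx; case: bx => -[]; lra.
move/(interiorE rect): hi => [_].
rewrite (xs_ext (T := fun u' => (fun y' => y' <= y) (vy v u'))).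
  by rewrite (xs_hconst_y rect (fun y' => y' <= y)).
move=> u'; rewrite /Sp /=; have := hu u' => hu'.
by have -> : vx v (ev v u) - t < vx v u' by rewrite ex; lra.
Qed.

Lemma on_edge_interior i y f : vertb v i ->
  (vy v i < y /\ y < vy v (ordS i)) \/ (vy v (ordS i) < y /\ y < vy v i) ->
  on_edge v (vx v i, y) f -> f = i.
Proof.
move=> vi hy hf; case: (f =P i) => // ne.
have hi : on_edge v (vx v i, y) i.
  apply: (on_edge_pt rect) => /=; last by left; apply/eqP.
    by rewrite -(eqP vi); left; rewrite lexx.
  by case: hy => -[]; [left|right]; split; apply: ltW.
case: (simple_pt simp hi hf ne) => e.
  have e2 : y = vy v i by have := congr1 snd e.
  by rewrite e2 ltxx in hy; case: hy => -[] //; rewrite ltxx.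
have e2 : y = vy v (ordS i) by have := congr1 snd e.
by rewrite e2 ltxx in hy; case: hy => -[] //; rewrite ltxx.
Qed.

Lemma quad_left i w : vert_edge v i -> (w = i \/ w = ordS i) -> convex_vertex v w ->
  vx v (nbh v w) < vx v w -> ~ left_outside v i.
Proof.
move=> vk hw cw hlt [eps0 e0 lo].
have ew : ev v w = i.
  apply/esym/(vedge_thru rect simp); first exact: vert_vertb.
  by case: hw => ->; [apply: vertex_on_edge | apply: vertex_on_edge'].
have [M [M0 [Me Md]]] := pick2 e0 (d_pos gd).
have [a [c [a0 c0 /andP [ha1 ha2] /andP [hc1 hc2] hint]]] := corner_pt cw M0.
have [_ [_ gy]] := gd.
have hy : Num.min (vy v i) (vy v (ordS i)) < vy v w + c * (vy v (nbv v w) - vy v w) <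
   Num.max (vy v i) (vy v (ordS i)).
  rewrite -ew; apply: ev_range.
  have ne := nbv_y rect (w := w).
  case: (ltrgtP (vy v w) (vy v (nbv v w))) => h; [left|right|by case: ne].
    by have := gy _ _ h; split; nra.
  by have := gy _ _ h; split; nra.
have := lo (- (a * (vx v (nbh v w) - vx v w))) _ (ltac:(apply/andP; split; nra)) hy.
rewrite -ew (ev_x rect) opprK => h; apply: h; right; exact: hint.
Qed.


Definition sin (i : 'I_n) (y : R) := (vy v i < y /\ y < vy v (ordS i)) \/ (vy v (ordS i) < y /\ y < vy v i).

Lemma mid_no_cross i x y1 y2 : vert_edge v i -> vx v i - d < x -> x < vx v i + d ->
  y1 <= y2 -> sin i y1 -> sin i y2 -> xs (Sp v (x, y1)) = xs (Sp v (x, y2)).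
Proof.
move=> vi h1 h2 y12 s1 s2.
have hv := @xs_vmove _ _ v rect x y1 y2 y12.
rewrite hv [X in _ (+) X]xs_false ?addbF // => f.
case hf: (horizb v f) => //=; case hl: (y1 < vy v f) => //=; case hh: (vy v f <= y2) => //=.
apply/negbTE/negP => st.
have bw := straddle_x gd st h1 h2.
have sf : sin i (vy v f).
  by rewrite /sin; case: s1 => -[]; case: s2 => -[]; lra.
have onf : on_edge v (vx v i, vy v f) f.
  apply: (on_edge_pt rect) => //=; last by right; apply/eqP.
  by rewrite -(eqP hf); left; rewrite lexx.
have := on_edge_interior (vert_vertb vi) sf onf => efi.
case: vi => _; apply; rewrite -efi; exact/eqP.
Qed.

Lemma dir_left i w : vert_edge v i -> (w = i \/ w = ordS i) -> convex_vertex v w ->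
  vx v w < vx v (nbh v w) -> left_outside v i.
Proof.
move=> vk hw cw hlt.
have ew : ev v w = i.
  apply/esym/(vedge_thru rect simp); first exact: vert_vertb.
  by case: hw => ->; [apply: vertex_on_edge | apply: vertex_on_edge'].
have d0 := d_pos gd.
have [a [c [a0 c0 /andP [ha1 ha2] /andP [hc1 hc2] hint]]] := corner_pt cw d0.
have [_ [gx gy]] := gd.
have exi : vx v i = vx v w by rewrite -ew (ev_x rect).
have s0 : sin i (vy v w + c * (vy v (nbv v w) - vy v w)).
  rewrite /sin -ew; have ne := nbv_y rect (w := w).
  case: (ev_ends v w) => -[-> ->];
  (case: (ltrgtP (vy v w) (vy v (nbv v w))) => h; last by case: ne);
  have := gy _ _ h; [left|right|right|left]; split; nra.
exists d => // t y /andP [t0 td] /minmax_strict' hy.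
have nb : ~ boundary v (vx v i - t, y).
  move=> [f /on_edgeP [bx by_]] /=; simpl in bx, by_; rewrite exi in bx.
  case: (rect f) => [[[ef _] _]|[[ef _] _]].
    rewrite -ef in bx; have e := btw_eq bx.
    by have := gapx gd (u := f) (w := w); rewrite -e => /(_ ltac:(lra) ltac:(lra)); lra.
  rewrite -ef in by_; have e := btw_eq by_.
  have g1 : vx v f < vx v w -> d <= vx v w - vx v f by apply: gx.
  have g2 : vx v (ordS f) < vx v w -> d <= vx v w - vx v (ordS f) by apply: gx.
  have tt : 0 < t < d by rewrite t0 td.
  case: (btw_shift tt bx g1 g2) => [bw|[l1 l2]]; last by case: bx => -[]; lra.
  have onf : on_edge v (vx v i, y) f.
    apply: (on_edge_pt rect) => //=; last by right.
      by rewrite exi.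
    by rewrite e -ef; left; rewrite lexx.
  have := on_edge_interior (vert_vertb vk) hy onf => efi.
  by case: vk => _; apply; rewrite -efi -ef.
have hx : xs (Sp v (vx v i - t, y)) = false.
  have m1 : vx v i - d < vx v i - t by lra.
  have m2 : vx v i - t < vx v i + d by lra.
  have -> : xs (Sp v (vx v i - t, y)) = xs (Sp v (vx v i - t, vy v w + c * (vy v (nbv v w) - vy v w))).
    case: (lerP y (vy v w + c * (vy v (nbv v w) - vy v w))) => hle.
      exact: (mid_no_cross vk m1 m2 hle hy s0).
    exact/esym/(mid_no_cross vk m1 m2 (ltW hle) s0 hy).
  have hv := @hcross _ _ v rect simp d gd w (vx v i - t) (vx v w + a * (vx v (nbh v w) - vx v w))
    (vy v w + c * (vy v (nbv v w) - vy v w)).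
  have pa : 0 < a * (vx v (nbh v w) - vx v w) by apply: mulr_gt0; lra.
  rewrite hv; [|lra ..].
  have [_ ->] := (interiorE rect _).1 hint.
  by rewrite vstraddle_true //; lra.
by case=> // /(interiorE rect) [_]; rewrite hx.
Qed.

End Left2.


Lemma xor0E (a b : bool) : a (+) b = false -> a = b.
Proof. by case: a; case: b. Qed.

Section Parity2.
Variables (R : realFieldType) (n : nat) (v : 'I_n -> R * R).
Hypothesis rect : rectilinear v.

Lemma xs_P1 p : ~ boundary v p ->
  xs (fun u => (p.1 < vx v u) && (vy v u < p.2)) = xs (Sp v p).
Proof.
move=> nb; apply: xor0E; rewrite -xsD.
rewrite (xs_edges (horizb_alt rect)); apply: xs_false => f.
rewrite /Sp; case hf: (horizb v f) => //=; rewrite -(eqP hf).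
case: (ltrgtP (vy v f) p.2) => h /=.
- by case: (_ < _); case: (_ < _).
- by case: (_ < _); case: (_ < _).
apply/negbTE/negP => st.
have : on_edge v p f.
  apply: (on_edge_pt rect); last by right; apply/eqP.
  - case: (ltP p.1 (vx v f)) st => h1; case: (ltP p.1 (vx v (ordS f))) => h2 //= _.
      by right; split => //; apply: ltW.
    by left; split => //; apply: ltW.
  - by rewrite -(eqP hf) h; left; rewrite lexx.
by move=> onf; apply: nb; exists f.
Qed.

Lemma xs_P2 x y : xs (fun u => (x < vx v u) && (y <= vy v u)) = xs (fun u => (x < vx v u) && (vy v u < y)).
Proof.
apply: xor0E; rewrite -xsD.
rewrite (xs_ext (T := fun u => (fun a => x < a) (vx v u))); first exact: xs_vconst_x.
by move=> u; rewrite [vy v u < y]ltNge; case: (x < _); case: (y <= _).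
Qed.

Lemma xs_P3 x y : xs (fun u => (vx v u <= x) && (vy v u < y)) = xs (fun u => (x < vx v u) && (vy v u < y)).
Proof.
apply: xor0E; rewrite -xsD.
rewrite (xs_ext (T := fun u => (fun a => a < y) (vy v u))); first exact: (xs_hconst_y rect (fun a => a < y)).
by move=> u; rewrite [vx v u <= x]leNgt; case: (x < _); case: (_ < y).
Qed.

End Parity2.

Definition flipv (R : realFieldType) n (v : 'I_n -> R * R) : 'I_n -> R * R :=
  fun i => ((v i).1, - (v i).2).

Section Flip.
Variables (R : realFieldType) (n : nat) (v : 'I_n -> R * R).
Local Notation w := (flipv v).

Lemma on_edgeF p i : on_edge w p i <-> on_edge v (p.1, - p.2) i.
Proof.
case: p => x y; rewrite /on_edge /vx /vy /flipv /=; split=> -[t [t01 e]]; exists t; split => //.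
  by case: e => -> ->; congr pair; ring.
case: e => -> e2; congr pair; rewrite -[y]opprK e2; ring.
Qed.

Lemma boundaryF p : boundary w p <-> boundary v (p.1, - p.2).
Proof. by split=> -[i h]; exists i; apply/on_edgeF. Qed.

Lemma vert_edgeF i : vert_edge w i <-> vert_edge v i.
Proof.
rewrite /vert_edge /vx /vy /flipv /=; split=> -[h1 h2]; split => // e; apply: h2.
  by rewrite e. by apply: oppr_inj.
Qed.

Lemma horiz_edgeF i : horiz_edge w i <-> horiz_edge v i.
Proof.
rewrite /horiz_edge /vx /vy /flipv /=; split=> -[h1 h2]; split => //.
  by apply: oppr_inj. by rewrite h1.
Qed.

Lemma rectF : rectilinear v -> rectilinear w.
Proof.
move=> r i; case: (r i) => -[h1 h2]; [left|right]; split;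
  by rewrite ?vert_edgeF ?horiz_edgeF.
Qed.

Lemma interiorF p : rectilinear v -> interior w p <-> interior v (p.1, - p.2).
Proof.
move=> r; have rw := rectF r.
rewrite (interiorE rw) (interiorE r) boundaryF.
have E : ~ boundary v (p.1, - p.2) -> xs (Sp w p) = xs (Sp v (p.1, - p.2)).
  move=> nb; rewrite -(xs_P1 r nb) /= -(xs_P2 r); apply: xs_ext => u.
  by rewrite /Sp /vx /vy /flipv /= lerNl.
by split=> -[nb hx]; split => //; rewrite ?E // -?E.
Qed.

Lemma inPF p : rectilinear v -> inP w p <-> inP v (p.1, - p.2).
Proof. by move=> r; rewrite /inP boundaryF interiorF. Qed.


Lemma vxF i : vx w i = vx v i. Proof. by []. Qed.
Lemma vyF i : vy w i = - vy v i. Proof. by []. Qed.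

Lemma simpleF : simple_polygon v -> simple_polygon w.
Proof.
move=> sv i j [x y] ne h1 h2; rewrite on_edgeF in h1; rewrite on_edgeF in h2.
case: (sv i j _ ne h1 h2) => -[e1 e2]; [left|right]; split => //;
  by rewrite /flipv -e2 /= opprK.
Qed.

Lemma orthoF : rectilinear v -> ortho_convex v -> ortho_convex w.
Proof.
move=> r [oh ov]; split.
  move=> c x1 x2 x; rewrite !(inPF _ r) /=; exact: oh.
move=> c y1 y2 y; rewrite !(inPF _ r) /= => h1 h2 /andP [l1 l2].
by apply: (ov c _ _ _ h2 h1); rewrite !lerN2 l1 l2.
Qed.

Lemma gapF d : gap v d -> gap w d.
Proof.
move=> [d0 [gx gy]]; split => //; split => // u u'.
by rewrite !vyF ltrN2 => h; have := gy _ _ h; lra.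
Qed.

Lemma mm_neg (a b y : R) : Num.min a b < y < Num.max a b -> Num.min (-a) (-b) < -y < Num.max (-a) (-b).
Proof. move/minmax_strict' => h; apply: minmax_strict; lra. Qed.

Lemma convexF x : rectilinear v -> convex_vertex w x <-> convex_vertex v x.
Proof.
move=> r; rewrite /convex_vertex.
have E : forall s t a b c : R, -(-a + s * (-b - -a) + t * (-c - -a)) = a + s * (b - a) + t * (c - a).
  by move=> *; ring.
split=> -[e e0 h]; exists e => // s t hs ht; have := h s t hs ht.
  by move/(interiorF _ r); rewrite /= !vxF !vyF E.
by move=> hi; apply/(interiorF _ r); rewrite /= !vxF !vyF E.
Qed.

Lemma left_outsideF i : rectilinear v -> left_outside w i <-> left_outside v i.
Proof.
move=> r; rewrite /left_outside; split=> -[e e0 h]; exists e => // t y ht hy.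
  move: (h t (- y) ht); rewrite !vyF => /(_ (mm_neg hy)); rewrite (inPF _ r) /= opprK.
  by [].
rewrite !vyF in hy; have := mm_neg hy; rewrite !opprK => hy'.
by rewrite (inPF _ r) /=; apply: h.
Qed.

Lemma left_knobF i : rectilinear v -> left_knob w i <-> left_knob v i.
Proof.
move=> r; rewrite /left_knob /knob !convexF // vert_edgeF left_outsideF //.
Qed.
End Flip.


Section Uniq.
Variables (R : realFieldType) (n : nat) (v : 'I_n -> R * R).
Hypothesis rect : rectilinear v.
Hypothesis simp : simple_polygon v.

Lemma vert_ends k : vert_edge v k -> exists w z, [/\ w = k \/ w = ordS k, z = k \/ z = ordS k,
  vy v w < vy v z, nbv v w = z & nbv v z = w].
Proof.
move=> vk; have vb := vert_vertb vk.
have n1 : nbv v k = ordS k by rewrite /nbv vb.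
have vb2 : vertb v (ordS k) = false.
  by have := vertb_pred rect (ordS k); rewrite ordSK vb; case: (vertb v (ordS k)).
have n2 : nbv v (ordS k) = k by rewrite /nbv vb2 ordSK.
case: vk => _ ne; case: (ltrgtP (vy v k) (vy v (ordS k))) => h; last by [].
  by exists k, (ordS k); split; auto.
by exists (ordS k), k; split; auto.
Qed.

Lemma vert_sin k w z y : vert_edge v k -> w = k \/ w = ordS k -> z = k \/ z = ordS k ->
  vy v w < vy v z -> vy v w < y -> y < vy v z -> sin v k y.
Proof.
move=> _ [->|->] [->|->] wz h1 h2; rewrite /sin; try by move: wz; rewrite ltxx.
  by left.
by right.
Qed.

Variable d : R.
Hypothesis gd : gap v d.

Lemma left_pair j k : ortho_convex v -> left_knob v j -> left_knob v k -> vx v j <= vx v k -> j = k.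
Proof.
move=> oc lj lk hjk.
have [[_ _] [vj _]] := lj.
have [[_ _] [vk [eps0 e0 lo]]] := lk.
have [w [z [hw hz wz nw nz]]] := vert_ends vk.
have [wj [zj [hwj hzj wzj _ _]]] := vert_ends vj.
have exj : forall u, u = j \/ u = ordS j -> vx v u = vx v j.
  by move=> u [->|->] //; apply/esym; case: vj.
have exk : forall u, u = k \/ u = ordS k -> vx v u = vx v k.
  by move=> u [->|->] //; apply/esym; case: vk.
case: (ltP (vy v wj) (vy v w)) => h1.
  exfalso; apply: (no_lower_left rect simp gd oc lk hw (u0 := wj)) => //; first by rewrite nw.
  by rewrite (exj _ hwj) (exk _ hw).
case: (ltP (vy v z) (vy v zj)) => h2.
  exfalso.
  have := @no_lower_left _ _ (flipv v) (rectF rect) (simpleF simp) d (gapF gd) k z zj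
    (orthoF rect oc) (ltac:(by apply/left_knobF)) hz.
  apply.
  - by change (- vy v z < - vy v (nbv v z)); rewrite nz ltrN2.
  - by change (vx v zj <= vx v z); rewrite (exj _ hzj) (exk _ hz).
  - by change (- vy v zj < - vy v z); rewrite ltrN2.
set y := (vy v wj + vy v zj) / 2.
have sk : sin v k y by apply: (vert_sin vk hw hz wz); rewrite /y; lra.
have sj : sin v j y by apply: (vert_sin vj hwj hzj wzj); rewrite /y; lra.
have onj : on_edge v (vx v j, y) j.
  apply: (on_edge_pt rect) => /=; last by left; case: vj.
    by case: vj => <- _; left; rewrite lexx.
  by case: sj => -[a b]; [left|right]; split; apply: ltW.
have onk : on_edge v (vx v k, y) k.
  apply: (on_edge_pt rect) => /=; last by left; case: vk.
    by case: vk => <- _; left; rewrite lexx.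
  by case: sk => -[a b]; [left|right]; split; apply: ltW.
case: (ltrgtP (vx v j) (vx v k)) => hx; last 1 first.
- by rewrite hx in onj; apply: (on_edge_interior rect simp (vert_vertb vk) sk onj).
- exfalso; have [t [t0 [te tk]]] := pick2 e0 (ltac:(rewrite subr_gt0; exact hx) : 0 < vx v k - vx v j).
  have := lo t y (ltac:(by rewrite t0 te)) (ltac:(by apply: minmax_strict)).
  apply; case: oc => oh _; apply: (oh y _ _ _ (inP_bnd onj) (inP_bnd onk)).
  apply/andP; split; lra.
- by move: hjk; rewrite leNgt hx.
Qed.

End Uniq.

Lemma left_unique (R : realFieldType) (n : nat) (v : 'I_n -> R * R) :
  orthogonally_convex_polygon v -> exists! k, left_knob v k.
Proof.
move=> [n4 [rect [simp oc]]].
have [d gd] := gap_exists v.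
have n0 : (0 < n)%N by apply: leq_trans n4.
have [k lk] := exists_left rect simp gd n0.
exists k; split => // k' lk'.
case: (lerP (vx v k) (vx v k')) => h.
  exact: (left_pair rect simp gd oc lk lk' h).
exact/esym/(left_pair rect simp gd oc lk' lk (ltW h)).
Qed.


Definition rotv (R : realFieldType) n (v : 'I_n -> R * R) : 'I_n -> R * R :=
  fun i => (- (v i).2, (v i).1).

Definition right_outside (R : realFieldType) n (v : 'I_n -> R * R) (i : 'I_n) : Prop :=
  exists2 eps : R, 0 < eps & forall t y : R, 0 < t < eps ->
    Num.min (vy v i) (vy v (ordS i)) < y < Num.max (vy v i) (vy v (ordS i)) ->
    ~ inP v (vx v i + t, y).

Section Rot.
Variables (R : realFieldType) (n : nat) (v : 'I_n -> R * R).
Local Notation w := (rotv v).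

Lemma vxR i : vx w i = - vy v i. Proof. by []. Qed.
Lemma vyR i : vy w i = vx v i. Proof. by []. Qed.

Lemma on_edgeR p i : on_edge w p i <-> on_edge v (p.2, - p.1) i.
Proof.
case: p => x y; rewrite /on_edge /vx /vy /rotv /=; split=> -[t [t01 e]]; exists t; split => //.
  by case: e => -> ->; congr pair; ring.
case: e => -> e2; congr pair; rewrite -[x]opprK e2; ring.
Qed.

Lemma boundaryR p : boundary w p <-> boundary v (p.2, - p.1).
Proof. by split=> -[i h]; exists i; apply/on_edgeR. Qed.

Lemma vert_edgeR i : vert_edge w i <-> horiz_edge v i.
Proof.
rewrite /vert_edge /horiz_edge !vxR !vyR; split=> -[h1 h2]; split => //.
  by apply: oppr_inj. by rewrite h1.
Qed.

Lemma horiz_edgeR i : horiz_edge w i <-> vert_edge v i.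
Proof.
rewrite /vert_edge /horiz_edge !vxR !vyR; split=> -[h1 h2]; split => // e; apply: h2.
  by rewrite e. by apply: oppr_inj.
Qed.

Lemma rectR : rectilinear v -> rectilinear w.
Proof.
move=> r i; case: (r i) => -[h1 h2]; [right|left]; split;
  by rewrite ?vert_edgeR ?horiz_edgeR.
Qed.

Lemma interiorR p : rectilinear v -> interior w p <-> interior v (p.2, - p.1).
Proof.
move=> r; have rw := rectR r.
rewrite (interiorE rw) (interiorE r) boundaryR.
have E : ~ boundary v (p.2, - p.1) -> xs (Sp w p) = xs (Sp v (p.2, - p.1)).
  move=> nb; rewrite -(xs_P1 r nb) /= -(xs_P3 r); apply: xs_ext => u.
  by rewrite /Sp vxR vyR /= ltrNr andbC.
by split=> -[nb hx]; split => //; rewrite ?E // -?E.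
Qed.

Lemma inPR p : rectilinear v -> inP w p <-> inP v (p.2, - p.1).
Proof. by move=> r; rewrite /inP boundaryR interiorR. Qed.

Lemma simpleR : simple_polygon v -> simple_polygon w.
Proof.
move=> sv i j [x y] ne h1 h2; rewrite on_edgeR in h1; rewrite on_edgeR in h2.
case: (sv i j _ ne h1 h2) => -[e1 e2]; [left|right]; split => //;
  by rewrite /rotv -e2 /= opprK.
Qed.

Lemma orthoR : rectilinear v -> ortho_convex v -> ortho_convex w.
Proof.
move=> r [oh ov]; split.
  move=> c x1 x2 x; rewrite !(inPR _ r) /= => h1 h2 /andP [l1 l2].
  by apply: (ov c _ _ _ h2 h1); rewrite !lerN2 l1 l2.
move=> c y1 y2 y; rewrite !(inPR _ r) /=; exact: oh.
Qed.

Lemma gapR d : gap v d -> gap w d.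
Proof.
move=> [d0 [gx gy]]; split => //; split => u u'; rewrite ?vxR ?vyR.
  by rewrite ltrN2 => h; have := gy _ _ h; lra.
exact: gx.
Qed.

Lemma convexR x : rectilinear v -> convex_vertex w x <-> convex_vertex v x.
Proof.
move=> r; rewrite /convex_vertex.
have E : forall s t a b c : R, -(-a + s * (-b - -a) + t * (-c - -a)) = a + s * (b - a) + t * (c - a).
  by move=> *; ring.
split=> -[e e0 h]; exists e => // s t hs ht; have := h s t hs ht.
  by move/(interiorR _ r); rewrite /= !vxR !vyR E.
by move=> hi; apply/(interiorR _ r); rewrite /= !vxR !vyR E.
Qed.

Lemma left_outsideR i : rectilinear v -> left_outside w i <-> above_outside v i.
Proof.
move=> r; rewrite /left_outside /above_outside.
have E : forall a b : R, - (- a - b) = a + b by move=> *; ring.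
split=> -[e e0 h]; exists e => // t y ht hy.
  move: (h t y ht); rewrite !vyR => /(_ hy); rewrite (inPR _ r) /= vxR E.
  by [].
rewrite (inPR _ r) /= vxR E; apply: h => //.
Qed.

Lemma above_outsideR i : rectilinear v -> above_outside w i <-> right_outside v i.
Proof.
move=> r; rewrite /above_outside /right_outside; split=> -[e e0 h]; exists e => // t y ht hy.
  move: (h t (- y) ht); rewrite !vxR => /(_ (mm_neg hy)); rewrite (inPR _ r) /= vyR opprK.
  by [].
rewrite !vxR in hy; have := mm_neg hy; rewrite !opprK => hy'.
by rewrite (inPR _ r) /= vyR; apply: h.
Qed.

Lemma knobR i : rectilinear v -> knob w i <-> knob v i.
Proof. by move=> r; rewrite /knob !convexR. Qed.

Lemma left_knobR i : rectilinear v -> left_knob w i <-> top_knob v i.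
Proof. by move=> r; rewrite /left_knob /top_knob knobR // vert_edgeR left_outsideR. Qed.

Lemma right_knobR i : rectilinear v -> right_knob w i <-> bottom_knob v i.
Proof. by move=> r; rewrite /right_knob /bottom_knob knobR // vert_edgeR left_outsideR. Qed.

Lemma ocpR : orthogonally_convex_polygon v -> orthogonally_convex_polygon w.
Proof.
move=> [n4 [r [s o]]]; split => //; split; first exact: rectR.
by split; [apply: simpleR | apply: orthoR].
Qed.

End Rot.


Section Right.
Variables (R : realFieldType) (n : nat) (v : 'I_n -> R * R).
Hypothesis rect : rectilinear v.
Hypothesis simp : simple_polygon v.
Variable d : R.
Hypothesis gd : gap v d.
Local Notation u2 := (rotv (rotv v)).

Lemma vx2 i : vx u2 i = - vx v i. Proof. by []. Qed.
Lemma vertb2 i : vertb u2 i = vertb v i.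
Proof. by rewrite /vertb !vx2 eqr_opp. Qed.
Lemma nbh2 w : nbh u2 w = nbh v w.
Proof. by rewrite /nbh vertb2. Qed.

Lemma rect2 : rectilinear u2. Proof. exact: rectR (rectR rect). Qed.
Lemma simp2 : simple_polygon u2. Proof. exact: simpleR (simpleR simp). Qed.
Lemma gap2 : gap u2 d. Proof. exact: gapR (gapR gd). Qed.

Lemma vert2 i : vert_edge u2 i <-> vert_edge v i.
Proof. by rewrite vert_edgeR horiz_edgeR. Qed.
Lemma convex2 w : convex_vertex u2 w <-> convex_vertex v w.
Proof. by rewrite (convexR _ (rectR rect)) (convexR _ rect). Qed.
Lemma lo2 i : left_outside u2 i <-> right_outside v i.
Proof. by rewrite (left_outsideR _ (rectR rect)) (above_outsideR _ rect). Qed.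

Lemma side i : knob v i -> vert_edge v i -> (~ left_outside v i <-> right_outside v i).
Proof.
move=> [ci _] vi; have hw : i = i \/ i = ordS i by left.
have vi2 : vert_edge u2 i by apply/vert2.
have ci2 : convex_vertex u2 i by apply/convex2.
have ne := nbh_x rect (w := i).
split.
  move=> nl; case: (ltrgtP (vx v i) (vx v (nbh v i))) => h; last by case: ne.
    by case: nl; apply: (dir_left rect simp gd vi hw ci h).
  apply/lo2; apply: (dir_left rect2 simp2 gap2 vi2 hw ci2).
  by rewrite nbh2 !vx2 ltrN2.
move=> /lo2 lo; case: (ltrgtP (vx v i) (vx v (nbh v i))) => h; last by case: ne.
  exfalso; apply: (quad_left rect2 simp2 gap2 vi2 hw ci2) lo.
  by rewrite nbh2 !vx2 ltrN2.
exact: (quad_left rect simp gd vi hw ci h).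
Qed.

Lemma right_iff i : right_knob v i <-> left_knob u2 i.
Proof.
rewrite (left_knobR _ (rectR rect)) /top_knob /right_knob (knobR _ rect)
  horiz_edgeR (above_outsideR _ rect).
split=> -[k [vk h]]; split => //; split => //; exact/(side k vk).
Qed.

End Right.

Lemma eu_iff (T : Type) (P Q : T -> Prop) : (forall i, P i <-> Q i) -> (exists! i, Q i) -> exists! i, P i.
Proof.
move=> h [k [qk u]]; exists k; split; first exact/h.
by move=> k' /h; apply: u.
Qed.

Lemma right_unique (R : realFieldType) (n : nat) (v : 'I_n -> R * R) :
  orthogonally_convex_polygon v -> exists! k, right_knob v k.
Proof.
move=> H; have [_ [rect [simp _]]] := H.
have [d gd] := gap_exists v.
apply: (eu_iff (right_iff rect simp gd)).
exact: left_unique (ocpR (ocpR H)).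
Qed.


End Aux.
Import Aux.

Theorem lemma6p17 (R : realFieldType) (n : nat) (v : 'I_n -> R * R) :
  orthogonally_convex_polygon v ->
  (exists! i : 'I_n, left_knob v i) /\ (exists! i : 'I_n, right_knob v i) /\
  (exists! i : 'I_n, top_knob v i) /\ (exists! i : 'I_n, bottom_knob v i).
Proof.
move=> H; split; first exact: left_unique H.
split; first exact: right_unique H.
have [_ [rect _]] := H.
split.
  apply: (eu_iff (fun i => iff_sym (left_knobR i rect))).
  exact: left_unique (ocpR H).
apply: (eu_iff (fun i => iff_sym (right_knobR i rect))).
exact: right_unique (ocpR H).
Qed.
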